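(* Let $i_{\max}=\max_k i_k$ and, for $0\le i\le i_{\max}$, $m_i=\sum_{k=1}^s\min(i,i_k)$ (so $0=m_0<m_1<\dots<m_{i_{\max}}=n$). For every $j\in\{1,\dots,n\}$, the integer $j-\deg_{\mathfrak n^-}F_j$ is the unique $i\in\{1,\dots,i_{\max}\}$ with $m_{i-1}<j\le m_i$. Equivalently, $\deg_{\mathfrak n^-}F_1=0$ and for $1\le j\le n-1$: $\deg_{\mathfrak n^-}F_{j+1}=\deg_{\mathfrak n^-}F_j$ if $j=m_i$ for some $i\in\{0,\dots,i_{\max}-1\}$, and $\deg_{\mathfrak n^-}F_{j+1}=\deg_{\mathfrak n^-}F_j+1$ otherwise.
   Context: Setup (parabolic contractions of $\mathfrak{gl}_n$). Let $\mathbb C$ be an algebraically closed field of characteristic $0$ and $n\ge 2$. Let $e_{p,q}$ ($1\le p,q\le n$) be the elementary matrices of $\mathfrak{gl}_n$ and $I=\{1,\dots,n\}$. Fix integers $0=\iota_0<\iota_1<\dots<\iota_{s-1}<\iota_s=n$ with $s\ge 2$. Put $I_k=\{\iota_{k-1}+1,\dots,\iota_k\}$, $i_k=|I_k|$ ($1\le k\le s$), and for $x\in I$ let $k(x)$ be the index with $x\in I_k$. Let $\mathfrak p=\operatorname{span}\{e_{p,q}: k(p)\le k(q)\}$ and $\mathfrak n^-=\operatorname{span}\{e_{p,q}: k(p)>k(q)\}$. The parabolic contraction $\mathfrak q=\mathfrak p\ltimes\mathfrak n^-$ is the vector space $\mathfrak{gl}_n$ with the Lie bracket $[p_1,p_2]=p_1p_2-p_2p_1$,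 $[p,x]=\pi_{\mathfrak n^-}(px-xp)$, $[x,y]=0$ for $p,p_1,p_2\in\mathfrak p$, $x,y\in\mathfrak n^-$, where $\pi_{\mathfrak n^-}$ is the projection onto $\mathfrak n^-$ along $\mathfrak p$. $S(\mathfrak q)$ is the polynomial algebra in the $e_{p,q}$. The $\mathfrak n^-$-degree of a monomial in the $e_{p,q}$ is the number of its factors lying in $\mathfrak n^-$; $\deg_{\mathfrak n^-}F$ is the maximum over monomials of $F$. For $J\subset I$, $\Delta_J=\sum_{\sigma\in\mathfrak S(J)}\varepsilon(\sigma)\prod_{l\in J}e_{l,\sigma(l)}$, and $F_j=\sum_{|J|=j}\Delta_J$. *)

(* Defs.v *)
From HB Require Import structures.
From mathcomp Require Import all_boot all_order all_algebra all_fingroup.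
From mathcomp Require Import mpoly.
Set Implicit Arguments. Unset Strict Implicit. Unset Printing Implicit Defensive.
Import GRing.Theory.
Local Open Scope ring_scope.

(* Points of I = {1..n} are represented 0-based by p : 'I_n (p stands for p+1).
   The variable e_{p,q} of S(q) is the polynomial variable 'X_(mxvec_index p q)
   of {mpoly R[n*n]}. *)

(* block index k(x) for x in {1..n} (1-based), given the cut points
   iota 0 = 0 < iota 1 < ... < iota s = n :
   k(x) = 1 + #{ k in 1..s-1 | iota k < x } *)
Definition kidx (s : nat) (iota : nat -> nat) (x : nat) : nat :=
  (\sum_(1 <= k < s) (iota k < x : nat) + 1)%N.

Definition kblk (n s : nat) (iota : nat -> nat) (p : 'I_n) : nat :=
  kidx s iota p.+1.

Definition evar (R : ringType) (n : nat) (p q : 'I_n) : {mpoly R[n * n]} :=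
  'X_(mxvec_index p q).

(* Delta_J = sum_{sigma in S(J)} eps(sigma) prod_{l in J} e_{l, sigma l};
   S(J) is realised as the permutations of 'I_n supported in J. *)
Definition Delta (R : ringType) (n : nat) (J : {set 'I_n}) : {mpoly R[n * n]} :=
  \sum_(sigma : 'S_n | perm_on J sigma)
     (-1) ^+ odd_perm sigma * \prod_(l in J) evar R l (sigma l).

Definition Fj (R : ringType) (n j : nat) : {mpoly R[n * n]} :=
  \sum_(J : {set 'I_n} | #|J| == j) Delta R J.

Definition ndeg_mon (n s : nat) (iota : nat -> nat) (m : 'X_{1..n * n}) : nat :=
  (\sum_(p : 'I_n) \sum_(q : 'I_n | kblk s iota q < kblk s iota p)
      m (mxvec_index p q))%N.

(* n^- degree of a polynomial: max over its monomials (0 for the zero polynomial) *)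
Definition ndeg (R : ringType) (n s : nat) (iota : nat -> nat)
    (F : {mpoly R[n * n]}) : nat :=
  (\max_(m <- msupp F) ndeg_mon s iota m)%N.

Definition bsize (iota : nat -> nat) (k : nat) : nat := (iota k - iota k.-1)%N.
Definition imax (s : nat) (iota : nat -> nat) : nat :=
  (\max_(1 <= k < s.+1) bsize iota k)%N.
Definition mi (s : nat) (iota : nat -> nat) (i : nat) : nat :=
  (\sum_(1 <= k < s.+1) minn i (bsize iota k))%N.

(* Main.v *)
Require Import Defs.
From HB Require Import structures.
From mathcomp Require Import all_boot all_order all_algebra all_fingroup.
From mathcomp Require Import mpoly.
From mathcomp Require Import zify.
Set Implicit Arguments. Unset Strict Implicit. Unset Printing Implicit Defensive.
Import GRing.Theory.
Local Open Scope ring_scope.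

Lemma mxvec_index_eq n (p q p' q' : 'I_n) :
  (mxvec_index p q == mxvec_index p' q') = (p == p') && (q == q').
Proof.
apply/eqP/andP => [|[/eqP-> /eqP->]//].
rewrite /mxvec_index => /cast_ord_inj /enum_rank_inj [-> ->]; by [].
Qed.

Definition mon n (J : {set 'I_n}) (sg : 'S_n) : 'X_{1..n * n} :=
  (\sum_(l in J) U_(mxvec_index l (sg l)))%MM.

Lemma monE n (J : {set 'I_n}) (sg : 'S_n) p q :
  mon J sg (mxvec_index p q) = ((p \in J) && (sg p == q) : nat).
Proof.
rewrite /mon mnm_sumE.
under eq_bigr do rewrite mnm1E mxvec_index_eq.
case: (boolP (p \in J)) => pJ /=.
  rewrite (bigD1 p) //= eqxx /= big1 ?addn0 // => l /andP[_ lp].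
  by rewrite (negbTE lp).
by rewrite big1 // => l lJ; case: eqP => [lp|//]; move: pJ; rewrite -lp lJ.
Qed.

Lemma mon_inj n (J J' : {set 'I_n}) (sg sg' : 'S_n) :
  perm_on J sg -> perm_on J' sg' -> mon J sg = mon J' sg' -> J = J' /\ sg = sg'.
Proof.
move=> hJ hJ' e.
have key : forall (A A' : {set 'I_n}) (t t' : 'S_n), mon A t = mon A' t' ->
   forall p, p \in A -> p \in A' /\ t' p = t p.
  move=> A A' t t' e' p pA.
  have := monE A t p (t p); rewrite pA eqxx e' monE.
  by case: (p \in A') => //=; case: eqP.
have JJ : J = J'.
  apply/setP => p; apply/idP/idP => h.
    by case: (key _ _ _ _ e p h).
  by case: (key _ _ _ _ (esym e) p h).
split => //; apply/permP => p.
case: (boolP (p \in J)) => pJ; first by case: (key _ _ _ _ e p pJ).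
by rewrite (out_perm hJ pJ) (out_perm hJ') // -JJ.
Qed.

Lemma prodX k n (R : ringType) (J : {set 'I_k}) (F : 'I_k -> 'X_{1..n}) :
  \prod_(l in J) ('X_[F l] : {mpoly R[n]}) = 'X_[(\sum_(l in J) F l)%MM].
Proof.
by rewrite (big_morph (fun m => ('X_[m] : {mpoly R[n]})) (@mpolyXD n R) (@mpolyX0 n R)).
Qed.

Lemma mcoeff_sign n (R : ringType) (b : bool) (P : {mpoly R[n]}) m :
  ((-1) ^+ b * P)@_m = (-1) ^+ b * P@_m.
Proof. by case: b; rewrite ?expr0 ?mul1r // expr1 !mulN1r mcoeffN. Qed.

Lemma coefFj (R : ringType) n j m :
  (Fj R n j)@_m = \sum_(J : {set 'I_n} | #|J| == j)
     \sum_(sg : 'S_n | perm_on J sg) (-1) ^+ odd_perm sg * ((mon J sg == m)%:R).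
Proof.
rewrite /Fj raddf_sum; apply: eq_bigr => J _.
rewrite /Delta raddf_sum; apply: eq_bigr => sg _.
apply: etrans; first exact: mcoeff_sign.
rewrite /evar prodX.
by rewrite mcoeffX.
Qed.

Lemma msupp_Fj (R : ringType) n j m : m \in msupp (Fj R n j) ->
  exists J : {set 'I_n}, exists sg : 'S_n, [/\ #|J| = j, perm_on J sg & mon J sg = m].
Proof.
rewrite mcoeff_msupp coefFj.
case: (boolP [exists J : {set 'I_n}, [exists sg : 'S_n,
   [&& #|J| == j, perm_on J sg & mon J sg == m]]]).
  by move=> /existsP[J /existsP[sg /and3P[/eqP h1 h2 /eqP h3]]] _; exists J, sg.
rewrite negb_exists => /forallP H.
rewrite big1 ?eqxx // => J hJ; rewrite big1 // => sg hsg.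
move: (H J); rewrite negb_exists => /forallP /(_ sg).
by rewrite hJ hsg /= => /negbTE ->; rewrite mulr0.
Qed.

Lemma mon_in_Fj (R : ringType) n j (J : {set 'I_n}) (sg : 'S_n) :
  #|J| = j -> perm_on J sg -> mon J sg \in msupp (Fj R n j).
Proof.
move=> hJ hsg; rewrite mcoeff_msupp coefFj (bigD1 J) ?hJ //=.
rewrite (bigD1 sg) //= eqxx mulr1 big1 ?addr0.
  rewrite big1 ?addr0 ?signr_eq0 // => J' /andP[_ hJJ].
  rewrite big1 // => sg' hsg'; case: eqP; rewrite ?mulr0 // => e.
  by case: (mon_inj hsg' hsg e) => eJ; rewrite eJ eqxx in hJJ.
move=> sg' /andP[hsg' ne]; case: eqP; rewrite ?mulr0 // => e.
by case: (mon_inj hsg' hsg e) => _ es; rewrite es eqxx in ne.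
Qed.

Lemma ndeg_mon_mon n s iota (J : {set 'I_n}) (sg : 'S_n) :
  ndeg_mon s iota (mon J sg) =
  #|[set l in J | (kblk s iota (sg l) < kblk s iota l)%N]|.
Proof.
rewrite /ndeg_mon -sum1_card [RHS]big_mkcond /=; apply: eq_bigr => p _.
rewrite inE.
under eq_bigr do rewrite monE.
case: (boolP (p \in J)) => pJ /=; last by rewrite big1.
rewrite big_mkcond (bigD1 (sg p)) //= eqxx big1 ?addn0.
  by case: ifP.
by move=> q /negbTE nq; rewrite eq_sym nq; case: ifP.
Qed.

Lemma ndeg_le (R : ringType) n s iota (F : {mpoly R[n * n]}) c :
  (forall m, m \in msupp F -> ndeg_mon s iota m <= c)%N -> (ndeg s iota F <= c)%N.
Proof. by move=> H; apply/bigmax_leqP_seq => m mF _; apply: H. Qed.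

Lemma ndeg_ge (R : ringType) n s iota (F : {mpoly R[n * n]}) m :
  m \in msupp F -> (ndeg_mon s iota m <= ndeg s iota F)%N.
Proof. by move=> mF; apply: (leq_bigmax_seq m). Qed.

Local Open Scope nat_scope.

Lemma iota_le s (iota : nat -> nat) :
  (forall k, k < s -> iota k < iota k.+1) ->
  forall a d, a + d <= s -> iota a + d <= iota (a + d).
Proof.
move=> hincr a; elim=> [|d IH] h; first by rewrite !addn0.
have h2 : a + d < s by rewrite addnS in h.
have h1 := IH (ltnW h2).
have := hincr _ h2; rewrite -addnS; lia.
Qed.

Lemma iota_mono s (iota : nat -> nat) :
  (forall k, k < s -> iota k < iota k.+1) ->
  forall a b, a <= b -> b <= s -> iota a + (b - a) <= iota b.
Proof.
move=> hincr a b ab bs; have := iota_le hincr (d := b - a) (a := a).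
by rewrite subnKC //; apply.
Qed.

Lemma kidx_eq s (iota : nat -> nat) :
  (forall k, k < s -> iota k < iota k.+1) ->
  forall K x, 1 <= K <= s -> iota K.-1 < x <= iota K -> kidx s iota x = K.
Proof.
move=> hincr K x /andP[K1 Ks] /andP[h1 h2].
rewrite /kidx (@big_cat_nat _ _ _ K) /=; try lia.
rewrite (eq_big_nat _ _ (F2 := fun _ => 1)); last first.
  move=> k /andP[k1 kK]; have := iota_mono hincr (a := k) (b := K.-1).
  move=> H; have : iota k <= iota K.-1 by apply: leq_trans (H _ _) ; lia.
  by move=> hk; rewrite (leq_ltn_trans hk h1).
rewrite [X in _ + X + _](eq_big_nat _ _ (F2 := fun _ => 0)); last first.
  move=> k /andP[Kk ks]; have := iota_mono hincr Kk (ltnW ks).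
  by move=> H; apply/eqP; rewrite eqb0 -leqNgt; lia.
rewrite !sum_nat_const_nat; lia.
Qed.

Section Blocks.
End Blocks.

Lemma kblk_range n s (iota : nat -> nat) :
  iota 0 = 0 -> iota s = n ->
  (forall k, k < s -> iota k < iota k.+1) ->
  forall p : 'I_n, 1 <= kblk s iota p <= s /\
     iota (kblk s iota p).-1 <= p < iota (kblk s iota p).
Proof.
move=> h0 hs hincr p.
have ex : exists k, p < iota k by exists s; rewrite hs.
case: (ex_minnP ex) => K hK hmin.
have K0 : 0 < K by case: K hK {hmin}; rewrite ?h0.
have Ks : K <= s by apply: hmin; rewrite hs.
have hK1 : iota K.-1 <= p.
  rewrite leqNgt; apply/negP => /hmin; lia.
have -> : kblk s iota p = K.
  by rewrite /kblk; apply: kidx_eq => //; apply/andP; split.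
by split; apply/andP; split.
Qed.

Lemma kblk_eqE n s (iota : nat -> nat) :
  iota 0 = 0 -> iota s = n ->
  (forall k, k < s -> iota k < iota k.+1) ->
  forall (p : 'I_n) K, 1 <= K <= s ->
  (kblk s iota p == K) = (iota K.-1 <= p < iota K).
Proof.
move=> h0 hs hincr p K hK; apply/eqP/idP => [<-|h].
  by case: (kblk_range h0 hs hincr p).
rewrite /kblk; apply: kidx_eq => //; lia.
Qed.

Lemma kblk_mono n s (iota : nat -> nat) (p q : 'I_n) :
  p <= q -> kblk s iota p <= kblk s iota q.
Proof.
move=> pq; rewrite /kblk /kidx leq_add2r; apply: leq_sum => k _.
by case: (ltnP (iota k) p.+1) => //= h; rewrite (leq_trans h).
Qed.

Lemma card_interval n a b : #|[set p : 'I_n | a <= p < b]| = minn b n - a.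
Proof.
rewrite -sum1_card big_mkcond /=.
under eq_bigr do rewrite inE.
rewrite -(big_mkord xpredT (fun p => if a <= p < b then 1 else 0)).
elim: n => [|n IH]; first by rewrite big_geq //; lia.
rewrite big_nat_recr //= IH; case: ifP => /andP; lia.
Qed.

Lemma card_block_cond n s (iota : nat -> nat) :
  iota 0 = 0 -> iota s = n ->
  (forall k, k < s -> iota k < iota k.+1) ->
  forall K c, 1 <= K <= s ->
  #|[set p : 'I_n | (kblk s iota p == K) && (p < c)]| = minn (iota K) c - iota K.-1.
Proof.
move=> h0 hs hincr K c hK.
have -> : [set p : 'I_n | (kblk s iota p == K) && (p < c)] =
          [set p : 'I_n | iota K.-1 <= p < minn (iota K) c].
  apply/setP => p; rewrite !inE kblk_eqE //; lia.
rewrite card_interval.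
have : iota K <= n by rewrite -hs; have := iota_mono hincr (a := K) (b := s); lia.
lia.
Qed.

Lemma card_sep_sum (T : finType) (J : {set T}) (P : pred T) :
  #|[set l in J | P l]| = \sum_(l in J) (P l : nat).
Proof.
rewrite -sum1_card big_mkcond [RHS]big_mkcond /=; apply: eq_bigr => l _.
by rewrite inE; case: (l \in J); case: (P l).
Qed.

Lemma sum_blocks n s (iota : nat -> nat) :
  iota 0 = 0 -> iota s = n ->
  (forall k, k < s -> iota k < iota k.+1) ->
  forall J : {set 'I_n},
  #|J| = \sum_(1 <= K < s.+1) #|[set l in J | kblk s iota l == K]|.
Proof.
move=> h0 hs hincr J.
under [RHS]eq_bigr do rewrite card_sep_sum.
rewrite exchange_big /= -sum1_card; apply: eq_bigr => l lJ.
have [/andP[k1 ks] _] := kblk_range h0 hs hincr l.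
rewrite (bigD1_seq (kblk s iota l)) ?mem_index_iota ?iota_uniq //; last by lia.
rewrite /= eqxx big1_seq ?addn0 // => K /andP[hK _].
by rewrite eq_sym (negbTE hK).
Qed.

Lemma seg_bound n (kk : 'I_n -> nat) (J : {set 'I_n}) (sg : 'S_n) K :
  perm_on J sg ->
  #|[set l in J | kk l == K]| <= #|[set l in J | kk l <= kk (sg l)]|.
Proof.
move=> hsg.
set B := [set l in J | kk l == K].
set ND := [set l in J | kk l <= kk (sg l)].
set X := [set l in J | K <= kk l].
set Y := [set l in J | K <= kk (sg l)].
have hY : Y = sg @^-1: X by apply/setP => l; rewrite !inE (perm_closed _ hsg).
have hXY : #|X| = #|Y| by rewrite hY card_preimset //; exact: perm_inj.
have c1 := cardsID Y X.
have c2 := cardsID X Y; rewrite setIC in c2.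
have c3 := cardsID Y B.
have c4 := cardsID B ND.
have s1 : #|B :\: Y| <= #|X :\: Y|.
  apply: subset_leq_card; apply/subsetP => l; rewrite !inE.
  case: (l \in J) => //=; case: (K <= kk (sg l)) => //=; lia.
have s2 : #|B :&: Y| <= #|ND :&: B|.
  apply: subset_leq_card; apply/subsetP => l; rewrite !inE.
  case: (l \in J) => //=; move=> /andP[/eqP-> ->]; rewrite eqxx; lia.
have s3 : #|Y :\: X| <= #|ND :\: B|.
  apply: subset_leq_card; apply/subsetP => l; rewrite !inE.
  case: (l \in J) => //= /andP[h1 h2].
  apply/andP; split; lia.
lia.
Qed.

Lemma UB n s (iota : nat -> nat) :
  iota 0 = 0 -> iota s = n ->
  (forall k, k < s -> iota k < iota k.+1) ->
  forall (J : {set 'I_n}) (sg : 'S_n) i0,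
  perm_on J sg -> mi s iota i0.-1 < #|J| ->
  #|[set l in J | kblk s iota (sg l) < kblk s iota l]| <= #|J| - i0.
Proof.
move=> h0 hs hincr J sg i0 hsg hmi.
set kk := kblk s iota.
have hD : #|[set l in J | kk (sg l) < kk l]| + #|[set l in J | kk l <= kk (sg l)]|
          = #|J|.
  rewrite -(cardsID [set l | kk (sg l) < kk l] J).
  have -> : J :&: [set l | kk (sg l) < kk l] = [set l in J | kk (sg l) < kk l].
    by apply/setP => l; rewrite !inE.
  have -> : J :\: [set l | kk (sg l) < kk l] = [set l in J | kk l <= kk (sg l)].
    by apply/setP => l; rewrite !inE -leqNgt andbC.
  by [].
case: (boolP [exists K : 'I_s.+1,
            (0 < K) && (i0 <= #|[set l in J | kk l == K]|)]).
  move=> /existsP[K /andP[_ hK]]; have := @seg_bound _ kk J sg K hsg; lia.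
rewrite negb_exists => /forallP H; exfalso.
have : #|J| <= mi s iota i0.-1; last by lia.
rewrite (sum_blocks h0 hs hincr J) /mi big_nat_cond [X in _ <= X]big_nat_cond.
apply: leq_sum => K /andP[/andP[K1 Ks] _].
have := H (Ordinal Ks); rewrite /= K1 /= -ltnNge => hK.
have : #|[set l in J | kk l == K]| <= bsize iota K.
  apply: (@leq_trans #|[set p : 'I_n | (kk p == K) && (p < n)]|).
    by apply: subset_leq_card; apply/subsetP => l; rewrite !inE ltn_ord andbT => /andP[].
  rewrite card_block_cond //; last by lia.
  rewrite /bsize; lia.
move=> h; rewrite leq_min andbC h /=; move: hK; case: (i0) => [//|i] /=.
by [].
Qed.

Lemma LB n (kk : 'I_n -> nat) (P : {set 'I_n}) i0 j (x0 : 'I_n) :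
  i0 <= j -> j <= #|P| ->
  (forall x y : 'I_n, x <= y -> kk x <= kk y) ->
  (forall x y, x \in P -> y \in P -> kk x = kk y -> y < x + i0) ->
  exists J : {set 'I_n}, exists sg : 'S_n,
    [/\ #|J| = j, perm_on J sg & j - i0 <= #|[set l in J | kk (sg l) < kk l]|].
Proof.
move=> hij hjP hmono hP.
set L := take j (enum P).
have hsize : size L = j by rewrite /L size_takel // -cardE.
have huniq : uniq L by rewrite /L take_uniq // enum_uniq.
have hLP : forall x, x \in L -> x \in P.
  by move=> x /mem_take; rewrite mem_enum.
have htr : transitive (fun x y : 'I_n => x < y).
  by move=> y x z; apply: ltn_trans.
have hsort : sorted (fun x y : 'I_n => x < y) L.
  apply: (subseq_sorted htr (s2 := enum 'I_n)).
    apply: (subseq_trans (take_subseq _ _)).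
    by rewrite enumT; apply: filter_subseq.
  by have := iota_ltn_sorted 0 n; rewrite -val_enum_ord sorted_map.
have hnth : forall a b, a < b < j -> nth x0 L a < nth x0 L b.
  move=> a b /andP[ab bj].
  by apply: (sorted_ltn_nth htr x0 hsort) => //; rewrite inE /= hsize //; apply: ltn_trans bj.
have hgap : forall a d, a + d < j -> nth x0 L a + d <= nth x0 L (a + d).
  move=> a; elim=> [|d IH] h; first by rewrite !addn0.
  have h1 : nth x0 L a + d <= nth x0 L (a + d) by apply: IH; rewrite addnS in h; exact: ltnW.
  have h2 := hnth (a + d) (a + d.+1); rewrite addnS in h2 *.
  have : a + d < (a + d).+1 < j by rewrite ltnSn -addnS.
  by move/h2; lia.
pose f x := if x \in L then nth x0 L ((index x L + (j - i0)) %% j) else x.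
have fL : forall x, x \in L -> f x \in L.
  move=> x xL; rewrite /f xL mem_nth // hsize ltn_mod.
  by move: xL; rewrite -index_mem hsize; case: (j).
have f_inj : injective f.
  move=> x y; rewrite /f; case: ifP => xL; case: ifP => yL.
  - have j0 : 0 < j by move: xL; rewrite -index_mem hsize; case: (j).
    move/eqP; rewrite nth_uniq ?hsize ?ltn_mod // => /eqP.
    move/eqP; rewrite eqn_modDr !modn_small -?hsize ?index_mem // => /eqP e.
    by rewrite -(nth_index x0 xL) -(nth_index x0 yL) e.
  - move=> e; have := fL x xL; rewrite /f xL e => h; by rewrite h in yL.
  - move=> e; have := fL y yL; rewrite /f yL -e => h; by rewrite h in xL.
  - by [].
pose sg := perm f_inj.
exists [set x in L], sg; split.
- by rewrite cardsE -hsize; apply/card_uniqP.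
- apply/subsetP => x; rewrite !inE permE /f; case: ifP => //; by rewrite eqxx.
pose S := map (nth x0 L) (iota i0 (j - i0)).
have Suniq : uniq S.
  rewrite map_inj_in_uniq ?iota_uniq // => a b.
  rewrite !mem_iota => ha hb /eqP; rewrite nth_uniq ?hsize //; [by move/eqP|lia|lia].
have -> : j - i0 = #|S| by rewrite (card_uniqP Suniq) size_map size_iota.
apply: subset_leq_card; apply/subsetP => x /mapP[a]; rewrite mem_iota => ha ->.
have aL : nth x0 L a \in L by rewrite mem_nth // hsize; lia.
rewrite !inE aL /= permE /f aL index_uniq ?hsize //; last by lia.
have -> : (a + (j - i0)) %% j = a - i0.
  have -> : a + (j - i0) = (a - i0) + j by lia.
  by rewrite modnDr modn_small //; lia.
have hg := hgap (a - i0) i0; rewrite subnK in hg; last by lia.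
have {}hg := hg ltac:(lia).
have hle := hmono _ _ (leq_trans (leq_addr i0 _) hg).
rewrite ltn_neqAle hle andbT; apply/eqP => e.
have := hP _ _ (hLP _ (mem_nth x0 _)) (hLP _ aL) e.
rewrite hsize => /(_ ltac:(lia)); rewrite ltnNge => /negP; apply; exact: hg.
Qed.

Lemma mi_mono s iota a b : a <= b -> mi s iota a <= mi s iota b.
Proof. by move=> ab; apply: leq_sum => K _; lia. Qed.

Lemma mi0 s iota : mi s iota 0 = 0.
Proof. by rewrite /mi big1 // => K _; rewrite min0n. Qed.

Lemma bsize_le_imax s iota K : 1 <= K <= s -> bsize iota K <= imax s iota.
Proof.
move=> hK; rewrite /imax; apply: (leq_bigmax_seq K) => //.
by rewrite mem_index_iota; lia.
Qed.

Lemma mi_ge s iota i K : 1 <= K <= s -> minn i (bsize iota K) <= mi s iota i.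
Proof.
move=> hK; rewrite /mi (bigD1_seq K) ?mem_index_iota ?iota_uniq //=; try lia.
Qed.

Lemma exists_big s iota i : 1 <= i -> i <= imax s iota ->
  exists K, 1 <= K <= s /\ i <= bsize iota K.
Proof.
move=> i1 hi.
case: (boolP [exists K : 'I_s.+1, (0 < K) && (i <= bsize iota K)]).
  move=> /existsP[K /andP[K1 hK]]; exists K; split => //.
  by rewrite K1 -ltnS ltn_ord.
rewrite negb_exists => /forallP H; exfalso.
have : imax s iota <= i.-1; last by lia.
apply/bigmax_leqP_seq => K; rewrite mem_index_iota => /andP[K1 Ks] _.
have := H (Ordinal Ks); rewrite /= K1 /= -ltnNge; lia.
Qed.

Lemma mi_imax n s (iota : nat -> nat) :
  iota 0 = 0 -> iota s = n ->
  (forall k, k < s -> iota k < iota k.+1) ->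
  mi s iota (imax s iota) = n.
Proof.
move=> h0 hs hincr; rewrite /mi.
rewrite (eq_big_nat _ _ (F2 := fun k => iota k - iota k.-1)); last first.
  move=> K hK; have := @bsize_le_imax s iota K hK; rewrite /bsize; lia.
rewrite big_add1 /= telescope_sumn_in // ?hs ?h0 ?subn0 // => k /andP[_ ks].
exact: ltnW (hincr _ ks).
Qed.

Lemma card_P n s (iota : nat -> nat) :
  iota 0 = 0 -> iota s = n ->
  (forall k, k < s -> iota k < iota k.+1) ->
  forall i0, #|[set p : 'I_n | p < iota (kblk s iota p).-1 + i0]| = mi s iota i0.
Proof.
move=> h0 hs hincr i0; rewrite (sum_blocks h0 hs hincr) /mi.
apply: eq_big_nat => K hK.
have -> : [set l in [set p : 'I_n | p < iota (kblk s iota p).-1 + i0] | kblk s iota l == K]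
   = [set p : 'I_n | (kblk s iota p == K) && (p < iota K.-1 + i0)].
  apply/setP => p; rewrite !inE; case: eqP => [->|]; by rewrite ?andbT ?andbF.
rewrite card_block_cond //; try lia.
have := iota_mono hincr (leq_pred K) (_ : K <= s); rewrite /bsize; move=> H; have {}H := H ltac:(lia). lia.
Qed.

Local Open Scope ring_scope.
Unset Implicit Arguments.

Theorem mainTheorem2 (R : closedFieldType) (hchar : [pchar R] =i pred0)
    (n s : nat) (iota : nat -> nat)
    (hn : (2 <= n)%N) (hs : (2 <= s)%N)
    (hiota0 : iota 0%N = 0%N) (hiotas : iota s = n)
    (hincr : forall k : nat, (k < s)%N -> (iota k < iota k.+1)%N) :
  forall j : nat, (1 <= j <= n)%N ->
    forall i : nat,
      ((1 <= i <= imax s iota)%N /\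
       (mi s iota i.-1 < j <= mi s iota i)%N)
      <-> i = (j - ndeg s iota (Fj R n j))%N.
Proof.
move=> j /andP[j1 jn] i.
have ex : exists i, (j <= mi s iota i)%N.
  by exists (imax s iota); rewrite (mi_imax hiota0 hiotas hincr).
case: (ex_minnP ex) => i0 hi0 hmin.
have i01 : (1 <= i0)%N.
  by case: i0 hi0 {hmin} => [|//]; rewrite mi0; lia.
have i0max : (i0 <= imax s iota)%N.
  by apply: hmin; rewrite (mi_imax hiota0 hiotas hincr).
have hlow : (mi s iota i0.-1 < j)%N.
  rewrite ltnNge; apply/negP => /hmin; lia.
have i0j : (i0 <= j)%N.
  have [K [hK hb]] := exists_big i01 i0max.
  have := @mi_ge s iota i0.-1 K hK; lia.
have hdeg : ndeg s iota (Fj R n j) = (j - i0)%N.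
  apply/eqP; rewrite eqn_leq; apply/andP; split.
    apply: ndeg_le => m /msupp_Fj [J [sg [hJ hsg <-]]].
    rewrite ndeg_mon_mon -hJ; apply: UB => //; by rewrite hJ.
  have x0 : 'I_n by exists 0%N; lia.
  have hP : forall x y : 'I_n,
      x \in [set p : 'I_n | (p < iota (kblk s iota p).-1 + i0)%N] ->
      y \in [set p : 'I_n | (p < iota (kblk s iota p).-1 + i0)%N] ->
      kblk s iota x = kblk s iota y -> (y < x + i0)%N.
    move=> x y; rewrite !inE => hx hy e.
    have [_ /andP[hx1 _]] := kblk_range hiota0 hiotas hincr x.
    by move: hy; rewrite -e; lia.
  have [J [sg [hJ hsg hD]]] := @LB n (kblk s iota)
      [set p : 'I_n | (p < iota (kblk s iota p).-1 + i0)%N] i0 j x0 i0j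
      ltac:(by rewrite (card_P hiota0 hiotas hincr))
      (fun x y => @kblk_mono n s iota x y) hP.
  apply: (leq_trans hD); rewrite -ndeg_mon_mon; apply: ndeg_ge.
  exact: mon_in_Fj.
rewrite hdeg subKn //; split.
  move=> [/andP[i1 imx] /andP[h1 h2]].
  have i0i : (i0 <= i)%N by apply: hmin.
  apply/eqP; rewrite eqn_leq i0i andbT leqNgt; apply/negP => lt.
  have := mi_mono s iota (_ : (i0 <= i.-1)%N); lia.
move=> ->; split; first by apply/andP.
by apply/andP.
Qed.
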